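(* Let $\tau$ be the random ordering in which $\tau(1),\tau(2),\dots$ are i.i.d. uniform on $\{1,\dots,T\}$. For every $S=\{(X_m,y_m)\}_{m=1}^T\in\mathcal{S}_T$ with $r_{\mathrm{avg}}=\frac1T\sum_{m=1}^T\operatorname{rank}(X_m)$ and every $k\ge2$, $$\mathbb{E}_\tau\big[F_{\tau,S}(k)\big]\le\frac{9(d-r_{\mathrm{avg}})}{k}.$$
   Context: Let $d\ge 1$, $T\ge1$. A task is a pair $(X_m,y_m)$ with $X_m\in\mathbb{R}^{n_m\times d}$, $y_m\in\mathbb{R}^{n_m}$ and $\operatorname{rank}(X_m)<d$. $\mathcal{S}_T$ denotes the set of collections $S=\{(X_m,y_m)\}_{m=1}^T$ of $T$ tasks such that $\|X_m\|\le 1$ (spectral norm) for all $m$ and there exists $w\in\mathbb{R}^d$ with $\|w\|\le 1$ and $y_m=X_mw$ for all $m$. Given $S$ and an ordering $\tau:\mathbb{N}^+\to\{1,\dots,T\}$, the iterates are $w_0=0$ and $w_t=w_{t-1}+X_{\tau(t)}^+(y_{\tau(t)}-X_{\tau(t)}w_{t-1})$, with $A^+$ the Moore–Penrose pseudoinverse. The forgetting at iteration $k$ is $F_{\tau,S}(k)=\frac1k\sum_{t=1}^k\|X_{\tau(t)}w_k-y_{\tau(t)}\|^2$. *)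

(* Defs.v *)
From HB Require Import structures.
From mathcomp Require Import all_boot all_order all_algebra.
From mathcomp Require Import reals.
From Stdlib Require Import ClassicalEpsilon.
Set Implicit Arguments. Unset Strict Implicit. Unset Printing Implicit Defensive.
Import Order.TTheory GRing.Theory Num.Theory.
Local Open Scope ring_scope.

Section Defs.
Variable R : realType.

(* Moore-Penrose pseudoinverse: B is the pseudoinverse of A iff the four
   Penrose conditions hold (real matrices, so adjoint = transpose). *)
Definition is_pinv (p q : nat) (A : 'M[R]_(p, q)) (B : 'M[R]_(q, p)) : Prop :=
  [/\ A *m B *m A = A, B *m A *m B = B,
      (A *m B)^T = A *m B & (B *m A)^T = B *m A].

Definition pinv (p q : nat) (A : 'M[R]_(p, q)) : 'M[R]_(q, p) :=
  epsilon (inhabits 0) (is_pinv A).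

Definition sqnorm (p : nat) (v : 'cV[R]_p) : R := \sum_(i < p) v i 0 ^+ 2.

Definition spec_norm_le1 (p q : nat) (X : 'M[R]_(p, q)) : Prop :=
  forall v : 'cV[R]_q, sqnorm (X *m v) <= sqnorm v.

Definition in_S_T (T d : nat) (n : 'I_T -> nat)
    (X : forall m : 'I_T, 'M[R]_(n m, d)) (y : forall m : 'I_T, 'cV[R]_(n m)) : Prop :=
  (forall m, \rank (X m) < d)%N /\
  (forall m, spec_norm_le1 (X m)) /\
  exists w : 'cV[R]_d, sqnorm w <= 1 /\ forall m, y m = X m *m w.

Definition step (T d : nat) (n : 'I_T -> nat)
    (X : forall m : 'I_T, 'M[R]_(n m, d)) (y : forall m : 'I_T, 'cV[R]_(n m))
    (w : 'cV[R]_d) (m : 'I_T) : 'cV[R]_d :=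
  w + pinv (X m) *m (y m - X m *m w).

Definition iterate (T d : nat) (n : 'I_T -> nat)
    (X : forall m : 'I_T, 'M[R]_(n m, d)) (y : forall m : 'I_T, 'cV[R]_(n m))
    (s : seq 'I_T) : 'cV[R]_d :=
  foldl (step X y) 0 s.

(* forgetting F_{tau,S}(k), where tau(t) = tau' (t-1) for t = 1..k *)
Definition forgetting (T d : nat) (n : 'I_T -> nat)
    (X : forall m : 'I_T, 'M[R]_(n m, d)) (y : forall m : 'I_T, 'cV[R]_(n m))
    (k : nat) (tau' : 'I_k -> 'I_T) : R :=
  let wk := iterate X y [seq tau' t | t <- enum 'I_k] in
  k%:R^-1 * \sum_(t < k) sqnorm (X (tau' t) *m wk - y (tau' t)).

(* E_tau[F_{tau,S}(k)] for tau(1), tau(2), ... i.i.d. uniform on the T tasks: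
   F(k) only depends on tau(1..k), which is uniform on the T^k sequences. *)
Definition expected_forgetting (T d : nat) (n : 'I_T -> nat)
    (X : forall m : 'I_T, 'M[R]_(n m, d)) (y : forall m : 'I_T, 'cV[R]_(n m))
    (k : nat) : R :=
  (T ^ k)%:R^-1 * \sum_(tau' : {ffun 'I_k -> 'I_T}) forgetting X y tau'.

Definition r_avg (T d : nat) (n : 'I_T -> nat)
    (X : forall m : 'I_T, 'M[R]_(n m, d)) : R :=
  T%:R^-1 * \sum_(m < T) (\rank (X m))%:R.

End Defs.

(* Main.v *)
Require Import Defs.
From HB Require Import structures.
From mathcomp Require Import all_boot all_order all_algebra.
From mathcomp Require Import reals.
From mathcomp.algebra_tactics Require Import ring lra.
From Stdlib Require Import ClassicalEpsilon.
Set Implicit Arguments. Unset Strict Implicit. Unset Printing Implicit Defensive.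
Import Order.TTheory GRing.Theory Num.Theory.
Local Open Scope ring_scope.



Section LA.
Variable R : realType.

Definition frob p q (M : 'M[R]_(p,q)) : R := \sum_i \sum_j M i j ^+ 2.

Lemma frob_ge0 p q (M : 'M[R]_(p,q)) : 0 <= frob M.
Proof. apply: sumr_ge0 => i _; apply: sumr_ge0 => j _; exact: sqr_ge0. Qed.

Lemma frob_trace p q (M : 'M[R]_(p,q)) : frob M = \tr (M^T *m M).
Proof.
rewrite /frob /mxtrace exchange_big /=; apply: eq_bigr => j _.
rewrite mxE; apply: eq_bigr => i _; by rewrite mxE expr2.
Qed.

Lemma frob_tr p q (M : 'M[R]_(p,q)) : frob M^T = frob M.
Proof.
rewrite /frob exchange_big /=; apply: eq_bigr => j _; apply: eq_bigr => i _.
by rewrite mxE.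
Qed.

Definition proj n (P : 'M[R]_n) := P^T = P /\ P *m P = P.

Lemma proj_compl n (P : 'M[R]_n) : proj P -> proj (1%:M - P).
Proof.
case=> PT PP; split; first by rewrite linearB /= trmx1 PT.
by rewrite mulmxBl mul1mx mulmxBr mulmx1 PP subrr subr0.
Qed.

Lemma frob_projE n q (P : 'M[R]_n) (M : 'M[R]_(n,q)) : proj P ->
  frob (P *m M) = \tr (M^T *m P *m M).
Proof.
case=> PT PP; rewrite frob_trace trmx_mul PT.
by rewrite mulmxA -(mulmxA M^T P P) PP.
Qed.

Lemma frob_split n q (P : 'M[R]_n) (M : 'M[R]_(n,q)) : proj P ->
  frob M = frob (P *m M) + frob ((1%:M - P) *m M).
Proof.
move=> pP; rewrite (frob_projE _ pP) (frob_projE _ (proj_compl pP)) -mxtraceD -mulmxDl -mulmxDr.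
by rewrite addrC subrK mulmx1 frob_trace.
Qed.

Lemma frob_projl n q (P : 'M[R]_n) (M : 'M[R]_(n,q)) : proj P ->
  frob (P *m M) <= frob M.
Proof. by move=> pP; rewrite (frob_split M pP) lerDl frob_ge0. Qed.

Lemma frob_projr n q (P : 'M[R]_n) (M : 'M[R]_(q,n)) : proj P ->
  frob (M *m P) <= frob M.
Proof.
move=> pP; rewrite -frob_tr trmx_mul (proj1 pP) -(frob_tr M).
exact: frob_projl.
Qed.

Lemma frob_subD p q (A B : 'M[R]_(p,q)) : frob (A - B) <= 2 * frob A + 2 * frob B.
Proof.
rewrite /frob !mulr_sumr -big_split /=; apply: ler_sum => i _.
rewrite !mulr_sumr -big_split /=; apply: ler_sum => j _.
rewrite !mxE; set a := A i j; set b := B i j.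
have := sqr_ge0 (a + b); rewrite !expr2 => h; lra.
Qed.

Lemma CS q (a b : 'I_q -> R) :
  (\sum_i a i * b i) ^+ 2 <= (\sum_i a i ^+ 2) * (\sum_i b i ^+ 2).
Proof.
set A := \sum_i a i ^+ 2; set B := \sum_i b i ^+ 2; set C := \sum_i a i * b i.
have A0 : 0 <= A by apply: sumr_ge0 => i _; exact: sqr_ge0.
have [Ae0|Ane0] := eqVneq A 0.
  have az : forall i, a i = 0.
    move=> i; apply/eqP; rewrite -sqrf_eq0; apply/eqP.
    exact: (@psumr_eq0P _ _ xpredT (fun j => a j ^+ 2) (fun j _ => sqr_ge0 (a j)) Ae0 i).
  have -> : C = 0 by rewrite /C big1 // => i _; rewrite az mul0r.
  by rewrite Ae0 expr0n /= mul0r.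
have Apos : 0 < A by rewrite lt_def Ane0 A0.
have key : 0 <= A * (A * B - C ^+ 2).
  have : 0 <= \sum_i (C * a i - A * b i) ^+ 2 by apply: sumr_ge0 => i _; exact: sqr_ge0.
  rewrite (eq_bigr (fun i => C ^+ 2 * a i ^+ 2 - (2 * C * A) * (a i * b i) + A ^+ 2 * b i ^+ 2)); last by move=> i _; ring.
  rewrite big_split /= sumrB -!mulr_sumr -/A -/B -/C => h.
  by have -> : A * (A * B - C ^+ 2) = C ^+ 2 * A - 2 * C * A * C + A ^+ 2 * B by ring.
rewrite -subr_ge0; move: key; rewrite pmulr_rge0 //.
Qed.

Lemma sqnorm_mul p q (M : 'M[R]_(p,q)) (w : 'cV[R]_q) :
  sqnorm (M *m w) <= frob M * sqnorm w.
Proof.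
rewrite /sqnorm /frob mulr_suml; apply: ler_sum => i _.
rewrite mxE; exact: (CS (fun j => M i j) (fun j => w j 0)).
Qed.

Lemma sqnormN p (v : 'cV[R]_p) : sqnorm (- v) = sqnorm v.
Proof. by apply: eq_bigr => i _; rewrite mxE sqrrN. Qed.

End LA.



Section PI.
Variable R : realType.

Lemma cTc_zero p (u : 'cV[R]_p) : u^T *m u = 0 -> u = 0.
Proof.
move=> h; apply/matrixP => i j; rewrite ord1 mxE.
have : (u^T *m u) 0 0 = 0 by rewrite h mxE.
rewrite mxE => hs.
apply/eqP; rewrite -sqrf_eq0; apply/eqP.
apply: (@psumr_eq0P _ _ xpredT (fun k => u k 0 ^+ 2) (fun k _ => sqr_ge0 _)) => //.
rewrite -{}[X in _ = X]hs; apply: eq_bigr => k _; by rewrite mxE expr2.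
Qed.

Lemma gram_unit p r (C : 'M[R]_(p,r)) : row_full C -> C^T *m C \in unitmx.
Proof.
move=> fC; rewrite -row_free_unit -kermx_eq0; apply/eqP/row_matrixP => i.
rewrite row0.
set v := row i (kermx _).
have hv : v *m (C^T *m C) = 0 by rewrite /v -row_mul mulmx_ker row0.
have : (C *m v^T)^T *m (C *m v^T) = 0.
  by rewrite trmx_mul trmxK mulmxA -(mulmxA v) hv mul0mx.
move/cTc_zero => h.
have : C *m v^T = C *m 0 by rewrite h mulmx0.
move/(row_full_inj fC) => /(congr1 trmx); rewrite trmxK => ->.
by rewrite trmx0.
Qed.

Lemma pinv_fact p q r (C : 'M[R]_(p,r)) (F : 'M[R]_(r,q)) :
  C^T *m C \in unitmx -> F *m F^T \in unitmx ->
  is_pinv (C *m F) (F^T *m invmx (F *m F^T) *m invmx (C^T *m C) *m C^T).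
Proof.
move=> uG uH.
set G := C^T *m C in uG *; set H := F *m F^T in uH *.
have GT : G^T = G by rewrite /G trmx_mul trmxK.
have HT : H^T = H by rewrite /H trmx_mul trmxK.
have eAB : C *m F *m (F^T *m invmx H *m invmx G *m C^T) = C *m invmx G *m C^T.
  by rewrite !mulmxA -(mulmxA C F) -/H mulmxK.
have eBA : (F^T *m invmx H *m invmx G *m C^T) *m (C *m F) = F^T *m invmx H *m F.
  by rewrite !mulmxA -(mulmxA _ C^T C) -/G mulmxKV.
split.
- by rewrite eAB !mulmxA -(mulmxA _ C^T C) -/G mulmxKV.
- by rewrite eBA !mulmxA -(mulmxA _ F F^T) -/H mulmxK.
- by rewrite eAB !trmx_mul trmxK trmx_inv GT mulmxA.
- by rewrite eBA !trmx_mul trmxK trmx_inv HT mulmxA.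
Qed.

Lemma pinv_exists p q (A : 'M[R]_(p,q)) : exists B, is_pinv A B.
Proof.
have uG := gram_unit (col_base_full A).
have uH : row_base A *m (row_base A)^T \in unitmx.
  have := @gram_unit _ _ (row_base A)^T; rewrite trmxK; apply.
  by rewrite /row_full mxrank_tr; exact: row_base_free.
have := pinv_fact uG uH; rewrite mulmx_base => h; eexists; exact: h.
Qed.

Lemma pinvP p q (A : 'M[R]_(p,q)) : is_pinv A (pinv A).
Proof. exact: epsilon_spec (pinv_exists A). Qed.

Lemma trace_ginv_gen p q r (C : 'M[R]_(p,r)) (F : 'M[R]_(r,q)) (Y : 'M[R]_(q,p)) L Rr :
  L *m C = 1%:M -> F *m Rr = 1%:M ->
  C *m F *m Y *m (C *m F) = C *m F -> \tr (Y *m (C *m F)) = r%:R.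
Proof.
move=> hL hR hA.
have e1 : F *m Y *m C = 1%:M.
  have : L *m (C *m F *m Y *m (C *m F)) *m Rr = L *m (C *m F) *m Rr by rewrite hA.
  by rewrite !mulmxA hL mul1mx -!mulmxA hR mulmx1 !mulmxA.
by rewrite mulmxA mxtrace_mulC mulmxA e1 mxtrace1.
Qed.

Lemma trace_ginv p q (A : 'M[R]_(p,q)) (Y : 'M[R]_(q,p)) :
  A *m Y *m A = A -> \tr (Y *m A) = (\rank A)%:R.
Proof.
have [L hL] := row_fullP (col_base_full A).
have [Rr hR] := row_freeP (row_base_free A).
have := trace_ginv_gen (Y:=Y) hL hR; rewrite mulmx_base; exact.
Qed.

End PI.



Section EX.
Variable R : realType.
Variable T : nat.
Hypothesis T0 : (0 < T)%N.

Definition avg (g : 'I_T -> R) : R := T%:R^-1 * \sum_m g m.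

Lemma avg_const c : avg (fun _ => c) = c.
Proof.
rewrite /avg sumr_const card_ord mulrC -(mulr_natr c) mulfK //.
by rewrite pnatr_eq0 -lt0n.
Qed.

Lemma avg_ext f g : (forall m, f m = g m) -> avg f = avg g.
Proof. by move=> h; rewrite /avg; congr (_ * _); apply: eq_bigr => m _; exact: h. Qed.

Lemma avg_add f g : avg (fun m => f m + g m) = avg f + avg g.
Proof. by rewrite /avg big_split mulrDr. Qed.

Lemma avg_scale c f : avg (fun m => c * f m) = c * avg f.
Proof. by rewrite /avg -mulr_sumr mulrCA. Qed.

Lemma avg_le f g : (forall m, f m <= g m) -> avg f <= avg g.
Proof.
move=> h; rewrite /avg ler_wpM2l ?invr_ge0 ?ler0n //.
by apply: ler_sum => m _; exact: h.
Qed.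

Fixpoint Ex (j : nat) (f : seq 'I_T -> R) : R :=
  if j is j'.+1 then avg (fun m => Ex j' (fun s => f (m :: s))) else f [::].

Lemma Ex_ext j f g : (forall s, size s = j -> f s = g s) -> Ex j f = Ex j g.
Proof.
elim: j f g => [|j IH] f g h /=; first by rewrite h.
apply: avg_ext => m; apply: IH => s hs; apply: h; by rewrite /= hs.
Qed.

Lemma Ex_le j f g : (forall s, size s = j -> f s <= g s) -> Ex j f <= Ex j g.
Proof.
elim: j f g => [|j IH] f g h /=; first by rewrite h.
apply: avg_le => m; apply: IH => s hs; apply: h; by rewrite /= hs.
Qed.

Lemma Ex_add j f g : Ex j (fun s => f s + g s) = Ex j f + Ex j g.
Proof.
elim: j f g => [|j IH] f g //=.
by rewrite -avg_add; apply: avg_ext => m; rewrite IH.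
Qed.

Lemma Ex_scale j c f : Ex j (fun s => c * f s) = c * Ex j f.
Proof.
elim: j f => [|j IH] f //=.
by rewrite -avg_scale; apply: avg_ext => m; rewrite IH.
Qed.

Lemma Ex_const j c : Ex j (fun _ => c) = c.
Proof.
elim: j => [|j IH] //=.
by rewrite -[RHS](avg_const c); apply: avg_ext.
Qed.

Lemma Ex_sum j N (F : 'I_N -> seq 'I_T -> R) :
  Ex j (fun s => \sum_(i < N) F i s) = \sum_(i < N) Ex j (F i).
Proof.
elim: N F => [|N IH] F.
  by rewrite big_ord0 -[RHS](Ex_const j 0); apply: Ex_ext => s _; rewrite big_ord0.
rewrite big_ord_recr /= -IH -Ex_add; apply: Ex_ext => s _; by rewrite big_ord_recr.
Qed.

Lemma Ex_avg j (g : 'I_T -> seq 'I_T -> R) :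
  Ex j (fun s => avg (fun m => g m s)) = avg (fun m => Ex j (g m)).
Proof. by rewrite /avg Ex_scale Ex_sum. Qed.

Lemma Ex_cat p q f : Ex (p + q) f = Ex p (fun a => Ex q (fun b => f (a ++ b))).
Proof.
elim: p f => [|p IH] f //=.
apply: avg_ext => m; by rewrite IH.
Qed.

Lemma Ex_rcons j f : Ex j.+1 f = Ex j (fun a => avg (fun m => f (rcons a m))).
Proof.
rewrite -addn1 Ex_cat; apply: Ex_ext => a _ /=.
by apply: avg_ext => m; rewrite cats1.
Qed.

Lemma Ex_mid p q f :
  Ex (p + q.+1) f = Ex p (fun a => avg (fun m => Ex q (fun b => f (a ++ m :: b)))).
Proof. by rewrite Ex_cat. Qed.

Lemma sum_ffun_Ex k (G : seq 'I_T -> R) :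
  \sum_(f : {ffun 'I_k -> 'I_T}) G [seq f t | t <- enum 'I_k] = (T ^ k)%:R * Ex k G.
Proof.
elim: k G => [|k IH] G.
  rewrite /= mul1r (eq_bigr (fun _ => G [::])); last first.
    by move=> f _; rewrite (_ : enum 'I_0 = [::]) //; apply: size0nil; rewrite size_enum_ord.
  by rewrite sumr_const card_ffun !card_ord expn0.
pose h (p : 'I_T * {ffun 'I_k -> 'I_T}) : {ffun 'I_k.+1 -> 'I_T} :=
  [ffun i => if unlift ord0 i is Some j then p.2 j else p.1].
pose h' (f : {ffun 'I_k.+1 -> 'I_T}) := (f ord0, [ffun i => f (lift ord0 i)]).
have hK : cancel h h'.
  case=> x g; rewrite /h /h' /= ffunE unlift_none; congr (_, _).
  by apply/ffunP => i; rewrite !ffunE liftK.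
have h'K : cancel h' h.
  move=> f; apply/ffunP => i; rewrite /h /h' ffunE /=.
  by case: (unliftP ord0 i) => [j ->|->]; rewrite ?ffunE.
rewrite (reindex h) /=; last by exists h' => p _ //; exact: h'K.
rewrite -(pair_big xpredT xpredT (fun x g => G [seq h (x, g) t | t <- enum 'I_k.+1])) /=.
rewrite (eq_bigr (fun x => (T ^ k)%:R * Ex k (fun s => G (x :: s)))); last first.
  move=> x _; rewrite -IH; apply: eq_bigr => g _.
  rewrite enum_ordSl /= -map_comp /h ffunE unlift_none; congr (G (_ :: _)).
  by apply: eq_map => i /=; rewrite ffunE liftK.
rewrite -mulr_sumr /= /avg expnS natrM (mulrC T%:R) -mulrA mulVKf //.
by rewrite pnatr_eq0 -lt0n.
Qed.

End EX.



Section Main.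
Variable R : realType.
Variables d T : nat.
Variable n : 'I_T -> nat.
Variable X : forall m : 'I_T, 'M[R]_(n m, d).
Variable y : forall m : 'I_T, 'cV[R]_(n m).

Definition Qm m : 'M[R]_d := pinv (X m) *m X m.
Definition Pm m : 'M[R]_d := 1%:M - Qm m.

Lemma Q_proj m : proj (Qm m).
Proof. case: (pinvP (X m)) => h1 h2 h3 h4; split => //; by rewrite /Qm mulmxA h2. Qed.

Lemma P_proj m : proj (Pm m).
Proof. exact: proj_compl (Q_proj m). Qed.

Lemma XQ m : X m *m Qm m = X m.
Proof. by rewrite /Qm mulmxA; case: (pinvP (X m)). Qed.

Lemma frob_P m : frob (Pm m) = d%:R - (\rank (X m))%:R.
Proof.
case: (P_proj m) => PT PP; rewrite frob_trace PT PP /Pm raddfB /= mxtrace1.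
by rewrite /Qm trace_ginv //; case: (pinvP (X m)).
Qed.

Fixpoint Pi (s : seq 'I_T) : 'M[R]_d := if s is m :: s' then Pi s' *m Pm m else 1%:M.

Lemma Pi_cat a b : Pi (a ++ b) = Pi b *m Pi a.
Proof. elim: a => [|m a IH] /=; first by rewrite mulmx1. by rewrite IH mulmxA. Qed.

Lemma frob_Pil s q (M : 'M[R]_(d,q)) : frob (Pi s *m M) <= frob M.
Proof.
elim: s M => [|m s IH] M /=; first by rewrite mul1mx.
rewrite -mulmxA; apply: le_trans (IH _) _; exact: frob_projl (P_proj m).
Qed.

Lemma foldl_step (w : 'cV[R]_d) : (forall m, y m = X m *m w) ->
  forall s w0, foldl (step X y) w0 s - w = Pi s *m (w0 - w).
Proof.
move=> hy; elim=> [|m s IH] w0 /=; first by rewrite mul1mx.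
rewrite IH -mulmxA; congr (_ *m _).
rewrite /step hy -mulmxBr mulmxA -/(Qm m) /Pm mulmxBl mul1mx.
rewrite -(opprB w0 w) mulmxN.
by rewrite addrAC.
Qed.

Lemma term_bound (w : 'cV[R]_d) : (forall m, y m = X m *m w) -> sqnorm w <= 1 ->
  (forall m, spec_norm_le1 (X m)) ->
  forall s m, sqnorm (X m *m iterate X y s - y m) <= frob (Qm m *m Pi s).
Proof.
move=> hy hw hX s m.
have e : X m *m iterate X y s - y m = - (X m *m (Qm m *m Pi s *m w)).
  rewrite hy -mulmxBr /iterate foldl_step // sub0r mulmxN.
  by rewrite mulmxN; congr (- _); rewrite -[in LHS](XQ m) !mulmxA.
rewrite e sqnormN; apply: le_trans (hX m _) _; apply: le_trans (sqnorm_mul _ _) _.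
by rewrite ler_piMr ?frob_ge0.
Qed.

Hypothesis T0 : (0 < T)%N.

Definition ell j := Ex j (fun s => avg (fun m => frob (Qm m *m Pi s))).
Definition fr j := Ex j (fun s => frob (Pi s)).

Lemma ell_fr j : ell j = fr j - fr j.+1.
Proof.
have h : fr j = ell j + Ex j (fun a => avg (fun m => frob (Pi (rcons a m)))).
  rewrite /ell -Ex_add; apply: Ex_ext => s _.
  rewrite -avg_add -[LHS](avg_const T0 (frob (Pi s))); apply: avg_ext => m.
  by rewrite -cats1 Pi_cat /= mul1mx (frob_split (Pi s) (Q_proj m)).
by rewrite {2}/fr Ex_rcons h addrK.
Qed.

Lemma ell_le j : ell j.+1 <= ell j.
Proof.
rewrite /ell /= -[X in _ <= X](avg_const T0); apply: avg_le => m'.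
apply: Ex_le => s _; apply: avg_le => m /=.
by rewrite mulmxA; apply: frob_projr (P_proj m').
Qed.

Lemma ell_anti a b : (a <= b)%N -> ell b <= ell a.
Proof.
elim: b => [|b IH]; first by rewrite leqn0 => /eqP ->.
rewrite leq_eqVlt => /orP [/eqP -> //| hab].
by apply: le_trans (ell_le b) (IH _).
Qed.

Lemma ell_sum N : \sum_(i < N) ell i.+1 = fr 1 - fr N.+1.
Proof.
elim: N => [|N IH]; first by rewrite big_ord0 subrr.
by rewrite big_ord_recr /= IH ell_fr addrA subrK.
Qed.

Lemma fr_ge0 j : 0 <= fr j.
Proof. rewrite -(Ex_const T0 j 0); apply: Ex_le => s _; exact: frob_ge0. Qed.

Lemma fr1E : fr 1 = d%:R - r_avg X.
Proof.
rewrite /fr /= /avg /r_avg; under eq_bigr do rewrite mul1mx frob_P.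
rewrite sumrB sumr_const card_ord mulrBr mulrC -(mulr_natr d%:R) mulfK //.
by rewrite pnatr_eq0 -lt0n.
Qed.

Definition m0 : 'I_T := Ordinal T0.

Lemma pos_bound p q :
  Ex (p + q.+1) (fun s => frob (Qm (nth m0 s p) *m Pi s))
  <= (if p is 0 then fr 1 else 2 * ell (p + q) + 2 * ell p).
Proof.
rewrite Ex_mid.
have E : forall a m b, size a = p ->
    frob (Qm (nth m0 (a ++ m :: b) p) *m Pi (a ++ m :: b))
    = frob (Qm m *m (Pi b *m Pm m *m Pi a)).
  by move=> a m b <-; rewrite nth_cat ltnn subnn /= Pi_cat.
case: p E => [|p] E.
  rewrite /fr /=; apply: avg_le => m; rewrite -[X in _ <= X](Ex_const T0 q).
  apply: Ex_le => b _; rewrite mul1mx.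
  apply: le_trans (frob_projl _ (Q_proj m)) _; exact: frob_Pil.
apply: (@le_trans _ _ (Ex p.+1 (fun a => avg (fun m => Ex q (fun b =>
   2 * frob (Qm m *m Pi (a ++ b)) + 2 * frob (Qm m *m Pi a)))))).
  apply: Ex_le => a ha; apply: avg_le => m; apply: Ex_le => b _; rewrite E //.
  have -> : Qm m *m (Pi b *m Pm m *m Pi a)
      = Qm m *m Pi (a ++ b) - Qm m *m Pi b *m (Qm m *m Pi a).
    by rewrite Pi_cat /Pm mulmxBr mulmx1 mulmxBl mulmxBr !mulmxA.
  apply: le_trans (frob_subD _ _) _; rewrite lerD2l; apply: ler_wpM2l => //.
  rewrite -mulmxA; apply: le_trans (frob_projl _ (Q_proj m)) _; exact: frob_Pil.
rewrite le_eqVlt; apply/orP; left; apply/eqP.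
have -> : Ex p.+1 (fun a => avg (fun m => Ex q (fun b =>
   2 * frob (Qm m *m Pi (a ++ b)) + 2 * frob (Qm m *m Pi a))))
   = Ex p.+1 (fun a => 2 * Ex q (fun b => avg (fun m => frob (Qm m *m Pi (a ++ b)))))
     + Ex p.+1 (fun a => 2 * avg (fun m => frob (Qm m *m Pi a))).
  rewrite -Ex_add; apply: Ex_ext => a _.
  transitivity (avg (fun m => 2 * Ex q (fun b => frob (Qm m *m Pi (a ++ b)))
                              + 2 * frob (Qm m *m Pi a))).
    by apply: avg_ext => m; rewrite Ex_add !Ex_scale (Ex_const T0).
  by rewrite avg_add !avg_scale (Ex_avg T0 q (fun m b => frob (Qm m *m Pi (a ++ b)))).
by rewrite /ell Ex_cat -!Ex_scale.
Qed.

Lemma core k : (1 <= k)%N ->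
  Ex k (fun s => \sum_(i < k) frob (Qm (nth m0 s i) *m Pi s)) <= 5 * fr 1.
Proof.
case: k => // k' _.
rewrite (Ex_sum T0).
have hpos : forall p, (p < k'.+1)%N ->
    Ex k'.+1 (fun s => frob (Qm (nth m0 s p) *m Pi s))
    <= (if p is 0 then fr 1 else 2 * ell k' + 2 * ell p).
  move=> p hp; have e : k'.+1 = (p + (k' - p).+1)%N by rewrite addnS subnKC.
  rewrite {1}e; apply: le_trans (pos_bound p (k' - p)) _.
  by case: p hp e => // p hp e; rewrite subnKC.
rewrite big_ord_recl.
set S := \sum_(i < k') ell i.+1.
have hS : S <= fr 1 by rewrite /S ell_sum lerBlDr lerDl fr_ge0.
apply: (@le_trans _ _ (fr 1 + \sum_(i < k') (4 * ell i.+1))).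
  apply: lerD; first exact: (hpos 0%N).
  apply: ler_sum => i _; apply: le_trans (hpos (lift ord0 i) _) _.
    by rewrite lift0 ltnS ltn_ord.
  rewrite lift0 /=.
  have : ell k' <= ell i.+1 by apply: ell_anti; exact: ltn_ord.
  lra.
rewrite -mulr_sumr -/S; lra.
Qed.

End Main.

Theorem mainTheorem7 (R : realType) (d T : nat) (n : 'I_T -> nat)
    (X : forall m : 'I_T, 'M[R]_(n m, d)) (y : forall m : 'I_T, 'cV[R]_(n m))
    (k : nat) :
  (1 <= d)%N -> (1 <= T)%N -> in_S_T X y -> (2 <= k)%N ->
  expected_forgetting X y k <= 9%:R * (d%:R - r_avg X) / k%:R.
Proof.
move=> d1 T1 [hrank [hX [w [hw hy]]]] k2.
pose G (s : seq 'I_T) := k%:R^-1 * \sum_(x <- s) sqnorm (X x *m iterate X y s - y x).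
rewrite /expected_forgetting.
rewrite (eq_bigr (fun f : {ffun 'I_k -> 'I_T} => G [seq f t | t <- enum 'I_k])); last first.
  by move=> f _; rewrite /forgetting /G big_map big_enum.
rewrite (sum_ffun_Ex T1 k G) mulKf; last by rewrite pnatr_eq0 expn_eq0 negb_and -lt0n T1.
apply: (@le_trans _ _ (Ex k (fun s => k%:R^-1 *
   \sum_(i < k) frob (Qm X (nth (m0 T1) s i) *m Pi X s)))).
  apply: Ex_le => s hs; rewrite /G ler_wpM2l ?invr_ge0 ?ler0n //.
  rewrite (big_nth (m0 T1)) big_mkord hs; apply: ler_sum => i _.
  exact: term_bound.
rewrite Ex_scale.
have hc := core X T1 (ltnW k2); have h0 := fr_ge0 X T1 1.
rewrite (fr1E X T1) in hc h0.
have kpos : 0 <= k%:R^-1 :> R by rewrite invr_ge0 ler0n.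
rewrite mulrC; apply: ler_wpM2r => //.
apply: le_trans hc _; lra.
Qed.
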